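(* Let $n\ge 3$ and let $M_n$ be the lattice consisting of $0$, $1$ and $n$ pairwise incomparable elements $a_1,\dots,a_n$ (with $0<a_i<1$ for all $i$). For each $i$ and any two distinct indices $j,k$ different from $i$, one has $\chi_{a_i}(x)=\big((x\wedge a_i)\vee a_j\big)\wedge\big((x\wedge a_i)\vee a_k\big)$ for all $x\in M_n$. Consequently $\mathsf{C}(M_n)=\mathsf{Pol}_{0,1}(M_n)$.
   Context: For $a\in L$, $\chi_a:L\to L$ is defined by $\chi_a(x)=1$ if $x\ge a$ and $x\ne0$, and $\chi_a(x)=0$ otherwise. An $n$-ary aggregation function on a bounded lattice $L$ ($n\ge1$) is a nondecreasing map $A:L^n\to L$ with $A(0,\dots,0)=0$, $A(1,\dots,1)=1$; $\mathsf{C}(L)$ is the set of all of them. Polynomials on $L$ are functions $L^n\to L$ built from projections and constants by finitely many pointwise joins and meets; $\mathsf{Pol}_{0,1}(L)$ is the set of polynomials preserving $0$ and $1$. *)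

(* Defs.v *)
From mathcomp Require Import all_boot.
Set Implicit Arguments. Unset Strict Implicit. Unset Printing Implicit Defensive.

Inductive Mn (n : nat) : Type := MBot | MTop | MAtom of 'I_n.
Arguments MBot {n}. Arguments MTop {n}.

Definition leM n (x y : Mn n) : bool :=
  match x, y with
  | MBot, _ => true
  | _, MTop => true
  | MAtom i, MAtom j => i == j
  | _, _ => false
  end.

Definition isBot n (x : Mn n) : bool := if x is MBot then true else false.

Definition meetM n (x y : Mn n) : Mn n :=
  if leM x y then x else if leM y x then y else MBot.
Definition joinM n (x y : Mn n) : Mn n :=
  if leM x y then y else if leM y x then x else MTop.

Definition chi n (a x : Mn n) : Mn n :=
  if leM a x && ~~ isBot x then MTop else MBot.

Definition is_aggregation n k (A : ('I_k -> Mn n) -> Mn n) : Prop :=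
  [/\ (forall x y : 'I_k -> Mn n, (forall i, leM (x i) (y i)) -> leM (A x) (A y)),
      A (fun _ => MBot) = MBot
    & A (fun _ => MTop) = MTop].

Inductive pterm (n k : nat) : Type :=
  | PVar of 'I_k
  | PConst of Mn n
  | PJoin of pterm n k & pterm n k
  | PMeet of pterm n k & pterm n k.

Fixpoint peval n k (p : pterm n k) (x : 'I_k -> Mn n) : Mn n :=
  match p with
  | PVar i => x i
  | PConst c => c
  | PJoin p q => joinM (peval p x) (peval q x)
  | PMeet p q => meetM (peval p x) (peval q x)
  end.

Definition is_pol01 n k (A : ('I_k -> Mn n) -> Mn n) : Prop :=
  (exists p : pterm n k, forall x, A x = peval p x)
  /\ A (fun _ => MBot) = MBot /\ A (fun _ => MTop) = MTop.

(* Main.v *)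
Require Import Defs.
From HB Require Import structures.
From mathcomp Require Import all_boot zify.
Set Implicit Arguments. Unset Strict Implicit. Unset Printing Implicit Defensive.

Section Fin.
Variable n : nat.
Definition encM (x : Mn n) : option (option 'I_n) :=
  match x with MBot => None | MTop => Some None | MAtom i => Some (Some i) end.
Definition decM (o : option (option 'I_n)) : Mn n :=
  match o with None => MBot | Some None => MTop | Some (Some i) => MAtom i end.
Lemma encK : cancel encM decM. Proof. by case. Qed.
End Fin.
HB.instance Definition _ n := Countable.copy (Mn n) (can_type (@encK n)).
HB.instance Definition _ n := Finite.copy (Mn n) (can_type (@encK n)).

Ltac brute := rewrite /meetM /joinM /=; repeat (case: eqP => //= ?; subst); rewrite ?eqxx //=.

Lemma leM_refl n (x : Mn n) : leM x x.
Proof. by case: x => //= i; rewrite eqxx. Qed.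
Lemma leM_trans n (x y z : Mn n) : leM x y -> leM y z -> leM x z.
Proof. by case: x => [||i]; case: y => [||j]; case: z => [||l] //= /eqP-> . Qed.
Lemma leM_anti n (x y : Mn n) : leM x y -> leM y x -> x = y.
Proof. by case: x => [||i]; case: y => [||j] //= /eqP->. Qed.
Lemma leM_meet n (x y z : Mn n) : leM z (meetM x y) = leM z x && leM z y.
Proof. case: x => [||i]; case: y => [||j]; case: z => [||l]; brute. Qed.
Lemma leM_join n (x y z : Mn n) : leM (joinM x y) z = leM x z && leM y z.
Proof. case: x => [||i]; case: y => [||j]; case: z => [||l]; brute. Qed.
Lemma chi_id n (i j k : 'I_n) : j != i -> k != i -> j != k ->
     forall x : Mn n,
       chi (MAtom i) x =
       meetM (joinM (meetM x (MAtom i)) (MAtom j))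
             (joinM (meetM x (MAtom i)) (MAtom k)).
Proof.
move=> Hji Hki Hjk x; move: Hji Hki Hjk; rewrite /chi.
case: x => [||l]; brute.
Qed.

Lemma chiE n (a y : Mn n) : a != MBot -> chi a y = if leM a y then MTop else MBot.
Proof. rewrite /chi; case: a => [||i] // _; case: y => //= l; by rewrite andbT. Qed.

Lemma leM_joinl n (x y : Mn n) : leM x (joinM x y).
Proof. by have := leM_refl (joinM x y); rewrite leM_join => /andP[]. Qed.
Lemma leM_joinr n (x y : Mn n) : leM y (joinM x y).
Proof. by have := leM_refl (joinM x y); rewrite leM_join => /andP[]. Qed.
Lemma leM_meetl n (x y : Mn n) : leM (meetM x y) x.
Proof. by have := leM_refl (meetM x y); rewrite leM_meet => /andP[]. Qed.
Lemma leM_meetr n (x y : Mn n) : leM (meetM x y) y.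
Proof. by have := leM_refl (meetM x y); rewrite leM_meet => /andP[]. Qed.

Section Main.
Variable m : nat.
Notation N := m.+3.

Definition sel (a : 'I_N) : 'I_N * 'I_N :=
  if val a == 0 then (inord 1, inord 2) else if val a == 1 then (inord 0, inord 2)
  else (inord 0, inord 1).

Lemma selP a : [/\ (sel a).1 != a, (sel a).2 != a & (sel a).1 != (sel a).2].
Proof.
case: a => [a Ha]; rewrite /sel /=; case: ifP => /eqP h0; last case: ifP => /eqP h1;
  (split; rewrite /= -(inj_eq val_inj) /= ?inordK //; lia).
Qed.

Section K.
Variable k : nat.

Definition chiT (a : 'I_N) (v : pterm N k) : pterm N k :=
  PMeet (PJoin (PMeet v (PConst k (MAtom a))) (PConst k (MAtom (sel a).1)))
        (PJoin (PMeet v (PConst k (MAtom a))) (PConst k (MAtom (sel a).2))).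

Lemma chiTE a v x : peval (chiT a v) x = if leM (MAtom a) (peval v x) then MTop else MBot.
Proof.
have [h1 h2 h3] := selP a.
by rewrite /chiT /= -chi_id // chiE.
Qed.

Definition a0 : 'I_N := inord 0.
Definition a1 : 'I_N := inord 1.

Definition dlt (c : Mn N) (v : pterm N k) : pterm N k :=
  match c with
  | MBot => PConst k MTop
  | MTop => PMeet (chiT a0 v) (chiT a1 v)
  | MAtom a => chiT a v
  end.

Lemma dltE c v x : peval (dlt c v) x = if leM c (peval v x) then MTop else MBot.
Proof.
case: c => [||a]; rewrite /dlt; [by []| |exact: chiTE].
have ne : a0 != a1 by rewrite -(inj_eq val_inj) /= !inordK.
transitivity (meetM (peval (chiT a0 v) x) (peval (chiT a1 v) x)); first by [].
rewrite !chiTE.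
case: (peval v x) => [||l] //=.
case: (eqVneq a0 l) => [<-|_]; case: (eqVneq a1 a0) => [e|_] //=.
by rewrite e eqxx in ne.
Qed.

Definition conjT (c : 'I_k -> Mn N) : pterm N k :=
  foldr (fun i acc => PMeet (dlt (c i) (PVar N i)) acc) (PConst k MTop) (enum 'I_k).

Lemma conjTE c x : peval (conjT c) x =
   if all (fun i => leM (c i) (x i)) (enum 'I_k) then MTop else MBot.
Proof.
rewrite /conjT; elim: (enum 'I_k) => [|i l IH] //=.
rewrite IH dltE /=; case: (leM (c i) (x i)) => //=.
by case: all.
Qed.

Definition polyA (A : ('I_k -> Mn N) -> Mn N) : pterm N k :=
  foldr (fun (c : {ffun 'I_k -> Mn N}) acc => PJoin (PMeet (PConst k (A c)) (conjT c)) acc) (PConst k MBot)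
        (enum {ffun 'I_k -> Mn N}).

Lemma meet_top y : meetM y (@MTop N) = y.
Proof. by case: y. Qed.
Lemma meet_bot y : meetM y (@MBot N) = MBot.
Proof. by case: y. Qed.

Lemma polyAE (A : ('I_k -> Mn N) -> Mn N) :
  (forall x y : 'I_k -> Mn N, (forall i, leM (x i) (y i)) -> leM (A x) (A y)) ->
  forall x, A x = peval (polyA A) x.
Proof.
move=> mon x; apply: leM_anti.
- have : (finfun x) \in enum {ffun 'I_k -> Mn N} by rewrite mem_enum.
  rewrite /polyA; elim: (enum {ffun 'I_k -> Mn N}) => [|c l IH] //=.
  rewrite inE => /orP[/eqP <-|/IH h]; last by apply: leM_trans h (leM_joinr _ _).
  apply: leM_trans (leM_joinl _ _).
  rewrite /= conjTE.
  have -> : all (fun i => leM (finfun x i) (x i)) (enum 'I_k).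
    by apply/allP => i _; rewrite ffunE leM_refl.
  rewrite meet_top; apply: mon => i; by rewrite ffunE leM_refl.
- rewrite /polyA; elim: (enum {ffun 'I_k -> Mn N}) => [|d l IH] //=.
  rewrite leM_join IH andbT /= conjTE.
  case: allP => [h|_]; last by rewrite meet_bot.
  rewrite meet_top; apply: mon => i; exact: h (mem_enum _ i).
Qed.

Lemma peval_mon (p : pterm N k) x y : (forall i, leM (x i) (y i)) -> leM (peval p x) (peval p y).
Proof.
move=> h; elim: p => [i|c|p IHp q IHq|p IHp q IHq] /=; [exact: h|exact: leM_refl| |].
- rewrite leM_join; apply/andP; split.
  + exact: leM_trans IHp (leM_joinl _ _).
  + exact: leM_trans IHq (leM_joinr _ _).
- rewrite leM_meet; apply/andP; split.
  + exact: leM_trans (leM_meetl _ _) IHp.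
  + exact: leM_trans (leM_meetr _ _) IHq.
Qed.
End K.
End Main.

Theorem mainTheorem9 (n : nat) (hn : 3 <= n) :
  (forall i j k : 'I_n, j != i -> k != i -> j != k ->
     forall x : Mn n,
       chi (MAtom i) x =
       meetM (joinM (meetM x (MAtom i)) (MAtom j))
             (joinM (meetM x (MAtom i)) (MAtom k)))
  /\
  (forall (k : nat), 1 <= k ->
     forall A : ('I_k -> Mn n) -> Mn n,
       is_aggregation A <-> is_pol01 A).
Proof.
split; first exact: chi_id.
case: n hn => [|[|[|m]]] // _ k _ A; split.
- case=> mon h0 h1; split; last by [].
  by exists (polyA A); exact: polyAE.
- case=> [[p hp] [h0 h1]]; split => // x y hxy.
  by rewrite !hp; exact: peval_mon.
Qed.
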